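(* Let $\Delta=\{q\in\mathbb R_+^C:\sum_cq_c=1\}$ and let $\widehat p$ be in the relative interior of $\Delta$ (all entries positive). For any $\widehat t,t^\star\in\mathbb R^C$, any $\rho\in\mathbb R_+^C$ and any $\varepsilon\ge\widehat p^\top\rho$, \[\sup\Big\{q^\top t^\star-\widehat p^\top\widehat t:\ q\in\Delta,\ \sum_{c=1}^Cq_c(\log q_c-\log\widehat p_c+\rho_c)\le\varepsilon\Big\}\le\|t^\star-\widehat t\|_\infty+\frac{\sqrt{2\varepsilon}}{\min_c\sqrt{\widehat p_c}}\sqrt{\sum_{c=1}^C\widehat p_c(\widehat t_c-\bar t)^2},\] where $\bar t=\widehat p^\top\widehat t$.
   Context: The convention $0\log0=0$ is used. *)

(* Defs.v *)
From HB Require Import structures.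
From mathcomp Require Import all_boot all_order all_algebra.
From mathcomp Require Import reals exp.
Set Implicit Arguments. Unset Strict Implicit. Unset Printing Implicit Defensive.
Import Order.TTheory GRing.Theory Num.Theory.
Local Open Scope ring_scope.

Section Defs.
Variables (R : realType) (C : nat).

Definition in_simplex (q : 'I_C -> R) : Prop :=
  (forall c, 0 <= q c) /\ \sum_c q c = 1.

Definition dotv (a b : 'I_C -> R) : R := \sum_c a c * b c.

(* sum_c q_c (log q_c - log phat_c + rho_c); with q_c = 0 the term is 0
   (convention 0 log 0 = 0, and the factor q_c = 0 kills the rest) *)
Definition kl_rho (q p rho : 'I_C -> R) : R :=
  \sum_c q c * (ln (q c) - ln (p c) + rho c).

Definition supnorm (a : 'I_C -> R) : R := \big[Num.max/0]_c `|a c|.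
End Defs.

(* Main.v *)
Require Import Defs.
From HB Require Import structures.
From mathcomp Require Import all_boot all_order all_algebra.
From mathcomp Require Import reals exp.
From mathcomp Require Import all_classical all_reals.
From mathcomp Require Import topology normedtype derive realfun.
From mathcomp Require Import ring lra.
Import Order.TTheory GRing.Theory Num.Theory.
Import numFieldNormedType.Exports.
Local Open Scope ring_scope.

Section S.
Variable R : realType.

Lemma dh1 (y : R) : 0 < y -> is_derive y 1
  (fun z : R => z - 1 - (z - 1) ^+ 2 * 2^-1 - ln z) (1 - (y - 1) - y^-1).
Proof.
move=> y0.
have h1 := is_derive1_ln y0.
have h2 := @is_derive_id _ _ y (1:R).
have h3 := is_deriveB h2 (is_derive_cst (1:R) y 1).
have H := is_deriveB (is_deriveB h3 (is_deriveM (is_deriveX 2 h3) (is_derive_cst (2^-1:R) y 1))) h1.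
apply: (is_derive_eq H).
rewrite /= !scaler0 add0r !subr0 -![_ *: _]/(_ * _).
congr (_ - _ - _). change (2^-1 * (2 * (y - 1) ^+ 1 * 1) = y - 1 :> R).
by rewrite expr1; field.
Qed.

Lemma ln_le1 (x : R) : 0 < x -> x <= 1 -> ln x <= x - 1 - (x - 1) ^+ 2 * 2^-1.
Proof.
move=> x0 x1.

pose h := (fun z : R => z - 1 - (z - 1) ^+ 2 * 2^-1 - ln z).

have inpos y : y \in `]x, 1[ -> 0 < y.

  rewrite in_itv.  move=> /andP[xy _].  exact: lt_trans xy.
suff : h 1 <= h x.
  
  rewrite /h ln1 subrr expr0n mul0r !subr0 subr_ge0.
  done.
  apply: (@ler0_derive1_nincr _ h x 1); last 3 first.
  - exact: lexx.
  - exact: x1.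
  - exact: lexx.
  
  - move=> y /inpos y0. rewrite /h. exact: (@ex_derive _ _ _ _ _ _ _ (dh1 y y0)).
  - move=> y /inpos y0; rewrite derive1E /h (@derive_val _ _ _ _ _ _ _ (dh1 y y0)).
    have -> : 1 - (y - 1) - y^-1 = - ((y - 1) ^+ 2 / y).
      by field; rewrite gt_eqF.
    by rewrite oppr_le0 divr_ge0 // ?sqr_ge0 // ltW.
  - apply: derivable_within_continuous => y.
    rewrite in_itv => /andP[xy _].
    rewrite /h. exact: (@ex_derive _ _ _ _ _ _ _ (dh1 y (lt_le_trans x0 xy))).
Qed.

Lemma dg1 (y : R) : 0 < y -> is_derive y 1
  (fun z : R => z * ln z - (z - 1) - (z - 1) ^+ 2 * 2^-1) (ln y - (y - 1)).
Proof.
move=> y0.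
have h1 := is_derive1_ln y0.
have h2 := @is_derive_id _ _ y (1:R).
have h3 := is_deriveB h2 (is_derive_cst (1:R) y 1).
have H := is_deriveB (is_deriveB (is_deriveM h2 h1) h3) (is_deriveM (is_deriveX 2 h3) (is_derive_cst (2^-1:R) y 1)).
apply: (is_derive_eq H).
rewrite /= !scaler0 add0r !subr0 -![_ *: _]/(_ * _).
change (y * y^-1 + ln y * 1 - (1 : R) - 2^-1 * (2 * (y - 1) ^+ 1 * 1) = ln y - (y - 1)).
by rewrite expr1; field; rewrite gt_eqF.
Qed.

Lemma xlnx_ge (x : R) : 0 < x -> x <= 1 -> (x - 1) + (x - 1) ^+ 2 * 2^-1 <= x * ln x.
Proof.
move=> x0 x1.
pose h := (fun z : R => z * ln z - (z - 1) - (z - 1) ^+ 2 * 2^-1).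
have inpos y : y \in `]x, 1[ -> 0 < y.
  rewrite in_itv => /andP[xy _]; exact: lt_trans xy.
suff : h 1 <= h x.
  rewrite /h ln1 mulr0 subrr expr0n mul0r !subr0 => H; lra.
apply: (@ler0_derive1_nincr _ h x 1); last 3 first.
- exact: lexx.
- exact: x1.
- exact: lexx.
- move=> y /inpos y0. rewrite /h. exact: (@ex_derive _ _ _ _ _ _ _ (dg1 y y0)).
- move=> y /inpos y0; rewrite derive1E /h (@derive_val _ _ _ _ _ _ _ (dg1 y y0)).
  rewrite subr_le0.
  have := @le_ln1Dx R (y - 1); rewrite addrCA subrr addr0; apply.
  lra.
- apply: derivable_within_continuous => y.
  rewrite in_itv => /andP[xy _].
  rewrite /h. exact: (@ex_derive _ _ _ _ _ _ _ (dg1 y (lt_le_trans x0 xy))).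
Qed.
End S.

Lemma pinsk (R : realType) (q p : R) : 0 <= q -> q <= 1 -> 0 < p -> p <= 1 ->
  (q - p) + (q - p) ^+ 2 * 2^-1 <= q * (ln q - ln p).
Proof.
move=> q0 q1 p0 p1.
have [->|qp0] := eqVneq q 0.
  rewrite mul0r; nra.
have {q0 qp0} q0 : 0 < q by rewrite lt_def qp0.
have [pq|qp] := leP p q.
  set x := p / q.
  have x0 : 0 < x by rewrite divr_gt0.
  have x1 : x <= 1 by rewrite ler_pdivrMr // mul1r.
  have H := @ln_le1 _ _ x0 x1.
  have E : ln x = ln p - ln q by rewrite ln_div // posrE.
  have Ep : p = x * q by rewrite /x mulrVK // unitfE gt_eqF.
  rewrite E in H.
  move: H; set L := ln p - ln q; rewrite Ep => H.
  have -> : q * (ln q - ln (x * q)) = - (q * L) by rewrite /L -Ep; ring.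
  have h1 : 0 <= q * (1 - q) * (x - 1) ^+ 2.
    by rewrite mulr_ge0 ?sqr_ge0 // mulr_ge0 ?subr_ge0 // ltW.
  have h2 := ler_wpM2l (ltW q0) H.
  nra.
set y := q / p.
have y0 : 0 < y by rewrite divr_gt0.
have y1 : y <= 1 by rewrite ler_pdivrMr // mul1r ltW.
have H := @xlnx_ge _ _ y0 y1.
have E : ln y = ln q - ln p by rewrite ln_div // posrE.
have Eq : q = y * p by rewrite /y mulrVK // unitfE gt_eqF.
rewrite E in H.
move: H; set L := ln q - ln p => H.
rewrite Eq.
have h1 : 0 <= p * (1 - p) * (y - 1) ^+ 2.
  by rewrite mulr_ge0 ?sqr_ge0 // mulr_ge0 ?subr_ge0 // ltW.
have h2 := ler_wpM2l (ltW p0) H.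
nra.
Qed.

Theorem lemmaC1 (R : realType) (C : nat) (hC : (0 < C)%N)
  (phat that tstar rho : 'I_C -> R) (eps : R) :
  (forall c, 0 < phat c) -> \sum_c phat c = 1 ->
  (forall c, 0 <= rho c) ->
  dotv phat rho <= eps ->
  forall q : 'I_C -> R, in_simplex q -> kl_rho q phat rho <= eps ->
  dotv q tstar - dotv phat that <=
    supnorm (fun c => tstar c - that c)
    + Num.sqrt (2 * eps)
      / (\big[Num.min/Num.sqrt (phat (Ordinal hC))]_c Num.sqrt (phat c))
      * Num.sqrt (\sum_c phat c * (that c - dotv phat that) ^+ 2).
Proof.
move=> p0 p1 r0 er q [q0 q1] kle.
set tb := dotv phat that.
set m := \big[Num.min/_]_c _.
have m0 : 0 < m.
  rewrite /m; elim/big_ind: _ => [|a b a0 b0|c _]; rewrite ?sqrtr_gt0 //.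
  by rewrite lt_min a0 b0.
have mp c : m ^+ 2 <= phat c.
  have H : m <= Num.sqrt (phat c) by exact: bigmin_le.
  rewrite -[phat c](sqr_sqrtr (ltW (p0 c))) !expr2.
  exact: (ler_pM (ltW m0) (ltW m0) H H).
have eps0 : 0 <= eps.
  apply: le_trans er; apply: sumr_ge0 => c _; exact: mulr_ge0 (ltW (p0 c)) (r0 c).
have qle1 c : q c <= 1.
  by rewrite -q1 (bigD1 c) //= lerDl sumr_ge0.
have ple1 c : phat c <= 1.
  by rewrite -p1 (bigD1 c) //= lerDl sumr_ge0 // => i _; exact: ltW.
have KL : \sum_c (q c - phat c) ^+ 2 * 2^-1 <= eps.
  apply: le_trans kle.
  have H : \sum_c ((q c - phat c) + (q c - phat c)^+2 * 2^-1) <= kl_rho q phat rho.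
    rewrite /kl_rho; apply: ler_sum => c _.
    apply: le_trans (@pinsk _ _ _ (q0 c) (qle1 c) (p0 c) (ple1 c)) _.
    have := mulr_ge0 (q0 c) (r0 c); lra.
  by move: H; rewrite big_split /= sumrB q1 p1 subrr add0r.
set d := fun c => q c - phat c.
set u := fun c => that c - tb.
have E : dotv q tstar - tb = \sum_c q c * (tstar c - that c) + \sum_c d c * u c.
  have Z : \sum_c d c * tb = 0 by rewrite -mulr_suml sumrB q1 p1 subrr mul0r.
  have E' : \sum_c (q c * tstar c - phat c * that c) =
     \sum_c (q c * (tstar c - that c) + d c * u c + d c * tb).
    by apply: eq_bigr => c _; rewrite /d /u; ring.
  by rewrite {1}/tb /dotv -sumrB E' !big_split /= Z addr0.
rewrite E; apply: lerD.
  have Hc c : tstar c - that c <= supnorm (fun c => tstar c - that c).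
    apply: le_trans (ler_norm _) _; rewrite /supnorm.
    exact: (le_bigmax _ (fun c => `|tstar c - that c|) c).
  apply: le_trans (ler_sum _ (fun c _ => ler_wpM2l (q0 c) (Hc c))) _.
  by rewrite -mulr_suml q1 mul1r.
set V := \sum_c phat c * (that c - tb) ^+ 2.
have V0 : 0 <= V.
  by apply: sumr_ge0 => c _; rewrite mulr_ge0 ?sqr_ge0 // ltW.
have HV : V = \sum_c phat c * u c ^+ 2 by [].
set a := Num.sqrt (2 * eps) / m.
set b := Num.sqrt V.
have a0 : 0 <= a by rewrite divr_ge0 ?sqrtr_ge0 // ltW.
have b0 : 0 <= b by rewrite sqrtr_ge0.
have a2 : a ^+ 2 = 2 * eps / m ^+ 2 by rewrite /a expr_div_n sqr_sqrtr // mulr_ge0.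
have b2 : b ^+ 2 = V by rewrite sqr_sqrtr.
have D2 : \sum_c d c ^+ 2 <= 2 * eps.
  by move: KL; rewrite -mulr_suml ler_pdivrMr // mulrC => H; exact: H.
have per c : 2 * a * b * (d c * u c) <= b ^+ 2 * d c ^+ 2 / m ^+ 2 + a ^+ 2 * (phat c * u c ^+ 2).
  have pc := p0 c.
  apply: (@le_trans _ _ (b ^+ 2 * d c ^+ 2 / phat c + a ^+ 2 * (phat c * u c ^+ 2))).
    rewrite -subr_ge0.
    have -> : b ^+ 2 * d c ^+ 2 / phat c + a ^+ 2 * (phat c * u c ^+ 2) - 2 * a * b * (d c * u c) = (b * d c - a * phat c * u c) ^+ 2 / phat c.
      by field; rewrite gt_eqF.
    by rewrite divr_ge0 ?sqr_ge0 // ltW.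
  rewrite lerD2r; apply: ler_wpM2l; first by rewrite mulr_ge0 ?sqr_ge0.
  by rewrite lef_pV2 ?posrE ?exprn_gt0 // mp.
have Ssum : 2 * a * b * \sum_c d c * u c <= 2 * (a ^+ 2 * b ^+ 2).
  rewrite mulr_sumr.
  apply: le_trans (ler_sum _ (fun c _ => per c)) _.
  rewrite big_split /= -mulr_suml -!mulr_sumr -HV.
  have H : b ^+ 2 * (\sum_c d c ^+ 2) / m ^+ 2 <= b ^+ 2 * a ^+ 2.
    rewrite a2 [in X in _ <= X]mulrA ler_pM2r ?invr_gt0 ?exprn_gt0 //.
    exact: (ler_wpM2l (sqr_ge0 b) D2).
  rewrite -b2; lra.
have := mulr_ge0 a0 b0; rewrite le_eqVlt => /orP[/eqP ab0|abp]; last by nra.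
rewrite -ab0.
move/esym/eqP: ab0; rewrite mulf_eq0 => /orP[/eqP a00|/eqP b00].
  have e0 : 2 * eps = a ^+ 2 * m ^+ 2 by rewrite a2 mulrVK // unitfE expf_neq0 // gt_eqF.
  rewrite a00 expr0n mul0r in e0.
  have Z : \sum_c d c ^+ 2 = 0.
    by apply/le_anti; rewrite -{2}e0 D2 sumr_ge0 // => c _; exact: sqr_ge0.
  have Zc := psumr_eq0P (fun c _ => sqr_ge0 (d c)) Z.
  rewrite big1 // => c _.
  by move/eqP: (Zc c isT); rewrite sqrf_eq0 => /eqP ->; rewrite mul0r.
have Z : V = 0 by rewrite -b2 b00 expr0n.
rewrite HV in Z.
have Zc := psumr_eq0P (fun c _ => mulr_ge0 (ltW (p0 c)) (sqr_ge0 (u c))) Z.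
rewrite big1 // => c _.
move/eqP: (Zc c isT); rewrite mulf_eq0 (gt_eqF (p0 c)) /= sqrf_eq0 => /eqP ->.
by rewrite mulr0.
Qed.
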